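(* Let $\alpha>1$, $\varepsilon>0$, $\delta\in(0,1)$, and let $\pi^*$ be the optimal partition selection primitive ($\pi^*(0)=0$, $\pi^*(n)=L(\pi^*(n-1))$ with $L(q)=\max\{p\in[q,1]: D^\delta_\alpha(\mathrm{Ber}(p)\|\mathrm{Ber}(q))\le\varepsilon\text{ and } D^\delta_\alpha(\mathrm{Ber}(q)\|\mathrm{Ber}(p))\le\varepsilon\}$). Then $\pi^*$ is non-decreasing, $n_d := \min\{n\in\mathbb{N}:\pi^*(n)=1\}$ is finite with $n_d\le\lceil1/\delta\rceil$, the function $\Pi(x) = \pi^*(n_d-x)-\pi^*(n_d-1-x)$ for $x\in\{0,\dots,n_d-1\}$ is a probability distribution, and with $\tau = n_d-1$ we have, for all $n\in\mathbb{Z}_{\ge0}$, $$\Pr_{Z\sim\Pi}(n+Z>\tau) = \pi^*(n).$$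
   Context: $\mathrm{Ber}(p)$: Bernoulli distribution. For $\alpha>1$, $D_\alpha(P\|Q)=\frac{1}{\alpha-1}\log\sum_x P(x)^\alpha Q(x)^{1-\alpha}$ and $D^\delta_\alpha(P\|Q)=\inf\{D_\alpha(P'\|Q'): P=(1-\delta)P'+\delta P'',\ Q=(1-\delta)Q'+\delta Q''\}$ over probability distributions. *)

(* Defs.v *)
From HB Require Import structures.
From mathcomp Require Import all_boot all_order all_algebra.
From mathcomp Require Import all_classical all_reals all_analysis.
Set Implicit Arguments. Unset Strict Implicit. Unset Printing Implicit Defensive.
Import Order.TTheory GRing.Theory Num.Theory.
Local Open Scope classical_set_scope.
Local Open Scope ring_scope.

Section RenyiDefs.
Variable R : realType.

Definition is_distr (T : finType) (P : T -> R) : Prop :=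
  (forall x, 0 <= P x) /\ \sum_(x : T) P x = 1.

Definition Ber (p : R) : bool -> R := fun b => if b then p else 1 - p.

(* One summand P(x)^a Q(x)^(1-a), a > 1, with the standard conventions
   0 * (anything) = 0 (in particular 0^a 0^(1-a) = 0) and p^a 0^(1-a) = +oo for p > 0. *)
Definition renyi_term (a p q : R) : \bar R :=
  if p == 0 then 0%E
  else if q == 0 then +oo%E
  else (p `^ a * q `^ (1 - a))%:E.

Definition renyi (T : finType) (a : R) (P Q : T -> R) : \bar R :=
  match (\sum_(x : T) renyi_term a (P x) (Q x))%E with
  | r%:E => (ln r / (a - 1))%:E
  | +oo%E => +oo%E
  | -oo%E => -oo%E
  end.

Definition srenyi (T : finType) (a delta : R) (P Q : T -> R) : \bar R :=
  ereal_inf [set dv | exists (P' P'' Q' Q'' : T -> R),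
    [/\ is_distr P' /\ is_distr P'' /\ is_distr Q' /\ is_distr Q'',
        (forall x, P x = (1 - delta) * P' x + delta * P'' x),
        (forall x, Q x = (1 - delta) * Q' x + delta * Q'' x) &
        dv = renyi a P' Q']].

(* L(q) = max { p in [q,1] : D^d_a(Ber p||Ber q) <= eps and D^d_a(Ber q||Ber p) <= eps }
   (formalized as the supremum of that set, which is the max when attained). *)
Definition Lsel (a eps delta q : R) : R :=
  sup [set p : R | [/\ q <= p, p <= 1,
        (srenyi a delta (Ber p) (Ber q) <= eps%:E)%E &
        (srenyi a delta (Ber q) (Ber p) <= eps%:E)%E]].

Definition pistar (a eps delta : R) (n : nat) : R := iter n (Lsel a eps delta) 0.

Definition PiDist (a eps delta : R) (nd x : nat) : R :=
  pistar a eps delta (nd - x) - pistar a eps delta (nd - 1 - x).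

End RenyiDefs.

(* Main.v *)
Require Import Defs.
From HB Require Import structures.
From mathcomp Require Import all_boot all_order all_algebra.
From mathcomp Require Import all_classical all_reals all_analysis.
From mathcomp Require Import ring lra zify.
Import Order.TTheory GRing.Theory Num.Theory.
Local Open Scope ring_scope.

Section H.
Variable R : realType.

Lemma term_self (a c : R) : 0 <= c -> renyi_term a c c = c%:E.
Proof.
move=> c0; rewrite /renyi_term; case: eqP => [->//|/eqP c0'].
rewrite -powRD; last by rewrite c0' implybT.
by rewrite addrC subrK powRr1.
Qed.

Lemma renyi_self (a r : R) : 0 <= r <= 1 -> renyi a (Ber r) (Ber r) = 0%E.
Proof.
move=> /andP[r0 r1]; rewrite /renyi.
have -> : (\sum_(x : bool) renyi_term a (Ber r x) (Ber r x))%E = 1%:E.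
  rewrite big_bool /= !term_self //; last by lra.
  by rewrite -EFinD; congr (_%:E); lra.
by rewrite ln1 mul0r.
Qed.

Lemma Ber_distr (r : R) : 0 <= r <= 1 -> is_distr (Ber r).
Proof.
move=> /andP[r0 r1]; split.
  by case => /=; lra.
by rewrite big_bool /=; lra.
Qed.

Lemma srenyi_small (a d p q r x y : R) :
  0 <= r <= 1 -> 0 <= x <= 1 -> 0 <= y <= 1 ->
  p = (1 - d) * r + d * x -> q = (1 - d) * r + d * y ->
  (srenyi a d (Ber p) (Ber q) <= 0)%E.
Proof.
move=> hr hx hy hp hq.
have <- : renyi a (Ber r) (Ber r) = 0%E by exact: renyi_self.
apply: ereal_inf_lbound.
exists (Ber r), (Ber x), (Ber r), (Ber y); split => //.
- by split; [exact: Ber_distr|split; [exact: Ber_distr|split; exact: Ber_distr]].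
- by case => /=; rewrite hp; ring.
- by case => /=; rewrite hq; ring.
Qed.
Lemma div01 (u v : R) : 0 <= u -> u <= v -> 0 < v -> 0 <= u / v <= 1.
Proof.
move=> u0 uv v0; apply/andP; split; first by rewrite divr_ge0 // ltW.
by rewrite ler_pdivrMr // mul1r.
Qed.

Lemma in_set_small (a eps d p q : R) : 0 < eps -> 0 < d -> d < 1 ->
  0 <= q -> q <= p -> p <= 1 -> p - q <= d ->
  (srenyi a d (Ber p) (Ber q) <= eps%:E)%E /\ (srenyi a d (Ber q) (Ber p) <= eps%:E)%E.
Proof.
move=> e0 d0 d1 q0 qp p1 pqd.
have dn0 : d != 0 by rewrite lt0r_neq0.
have dn1 : 1 - d != 0 by rewrite lt0r_neq0 // subr_gt0.
have le0 : (0 <= eps%:E)%E by rewrite lee_fin ltW.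
have [pd|dp] := lerP p d.
  have hr : 0 <= (0:R) <= 1 by apply/andP; split; lra.
  have hx' : 0 <= p / d <= 1 by apply: div01 => //; lra.
  have hy : 0 <= q / d <= 1 by apply: div01 => //; lra.
  have ep : p = (1 - d) * 0 + d * (p / d) by field.
  have eq : q = (1 - d) * 0 + d * (q / d) by field.
  split; [apply: le_trans (@srenyi_small a _ _ _ _ _ _ hr hx' hy ep eq) _|
           apply: le_trans (@srenyi_small a _ _ _ _ _ _ hr hy hx' eq ep) _]; by rewrite lee_fin ltW.
have hr : 0 <= (p - d) / (1 - d) <= 1 by apply: div01; lra.
have hx : 0 <= (1:R) <= 1 by apply/andP; split; lra.
have hy : 0 <= (q - p + d) / d <= 1 by apply: div01 => //; lra.
have e1 : (1 - d) * ((p - d) / (1 - d)) = p - d by rewrite mulrC divfK.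
have e2 : d * ((q - p + d) / d) = q - p + d by rewrite mulrC divfK.
have ep : p = (1 - d) * ((p - d) / (1 - d)) + d * 1 by rewrite e1; lra.
have eq : q = (1 - d) * ((p - d) / (1 - d)) + d * ((q - p + d) / d) by rewrite e1 e2; lra.
split; [apply: le_trans (@srenyi_small a _ _ _ _ _ _ hr hx hy ep eq) _|
           apply: le_trans (@srenyi_small a _ _ _ _ _ _ hr hy hx eq ep) _]; by rewrite lee_fin ltW.
Qed.

Lemma Lsel_props (a eps d q : R) : 0 < eps -> 0 < d -> d < 1 -> 0 <= q <= 1 ->
  [/\ q <= Lsel a eps d q, Lsel a eps d q <= 1 &
      forall p, q <= p -> p <= 1 -> p - q <= d -> p <= Lsel a eps d q].
Proof.
move=> e0 d0 d1 /andP[q0 q1].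
rewrite /Lsel; set S := (X in sup X).
have Sp : forall p, q <= p -> p <= 1 -> p - q <= d -> S p.
  move=> p qp p1 pqd; have [h1 h2] := @in_set_small a eps d p q e0 d0 d1 q0 qp p1 pqd.
  by split.
have ub : ubound S 1 by move=> p [].
have hub : has_ubound S by exists 1.
have ne : (S !=set0)%classic by exists q; apply: Sp => //; lra.
have hp : forall p, q <= p -> p <= 1 -> p - q <= d -> p <= sup S.
  by move=> p qp p1 pqd; apply: ub_le_sup => //; apply: Sp.
split.
- by apply: hp => //; lra.
- exact: ge_sup.
- exact: hp.
Qed.

Lemma tele (f : nat -> R) nd n :
  \sum_(x < nd) (if (nd - 1 < n + x)%N then f (nd - x)%N - f (nd - 1 - x)%N else 0)
  = f (minn n nd) - f 0%N.
Proof.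
elim: nd => [|nd IH]; first by rewrite big_ord0 minn0 subrr.
rewrite big_ord_recl /=.
have -> : \sum_(i < nd) (if (nd.+1 - 1 < n + lift ord0 i)%N
      then f (nd.+1 - lift ord0 i)%N - f (nd.+1 - 1 - lift ord0 i)%N else 0)
  = \sum_(i < nd) (if (nd - 1 < n + i)%N then f (nd - i)%N - f (nd - 1 - i)%N else 0).
  apply: eq_bigr => i _; rewrite lift0; have hi := ltn_ord i.
  have -> : (nd.+1 - 1 < n + i.+1)%N = (nd - 1 < n + i)%N by apply/idP/idP; lia.
  have -> : (nd.+1 - i.+1 = nd - i)%N by lia.
  by have -> : (nd.+1 - 1 - i.+1 = nd - 1 - i)%N by lia.
rewrite IH.
have [hn|hn] := leqP n nd.
  have -> : (nd.+1 - 1 < n + 0)%N = false by apply/negbTE; lia.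
  have -> : minn n nd.+1 = n by lia.
  by rewrite add0r.
have -> : (nd.+1 - 1 < n + 0)%N = true by lia.
have -> : minn n nd.+1 = nd.+1 by lia.
have -> : (nd.+1 - 0 = nd.+1)%N by lia.
have -> : (nd.+1 - 1 - 0 = nd)%N by lia.
by rewrite addrA subrK.
Qed.

Section P.
Variables (a eps d : R).
Hypotheses (e0 : 0 < eps) (d0 : 0 < d) (d1 : d < 1).
Local Notation P := (pistar a eps d).

Lemma pistar_S n : P n.+1 = Lsel a eps d (P n).
Proof. by []. Qed.

Lemma pistar_inv n : 0 <= P n <= 1 /\ (n%:R * d <= P n \/ P n = 1).
Proof.
elim: n => [|n [hP IH]].
  split; first by rewrite /pistar /= lexx ler01.
  by left; rewrite mul0r /pistar /=.
have [h1 h2 h3] := @Lsel_props a eps d (P n) e0 d0 d1 hP.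
move: hP => /andP[hp0 hp1].
rewrite pistar_S; split; first by apply/andP; split; lra.
have hS : n.+1%:R * d = n%:R * d + d by rewrite -addn1 natrD mulrDl mul1r.
have [hn|hn] := lerP (P n + d) 1.
  case: IH => [IH|IH]; last by lra.
  left; rewrite hS; have := h3 (P n + d); lra.
right; have := h3 1; lra.
Qed.

Lemma pistar_mono m n : (m <= n)%N -> P m <= P n.
Proof.
move=> mn; rewrite -(subnKC mn); elim: (n - m)%N => [|k IH].
  by rewrite addn0.
rewrite addnS pistar_S; apply: le_trans IH _.
have [hP _] := pistar_inv (m + k).
by have [h1 _ _] := @Lsel_props a eps d (P (m + k)) e0 d0 d1 hP.
Qed.
End P.
End H.

Theorem mainTheorem10 (R : realType) (a eps delta : R)
  (ha : 1 < a) (heps : 0 < eps) (hd0 : 0 < delta) (hd1 : delta < 1) :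
  (forall m n : nat, (m <= n)%N -> pistar a eps delta m <= pistar a eps delta n) /\
  exists nd : nat,
    [/\ pistar a eps delta nd = 1 /\
          (forall n : nat, pistar a eps delta n = 1 -> (nd <= n)%N),
        (nd%:Z <= Num.ceil (delta^-1))%R,
        (forall x : nat, (x < nd)%N -> 0 <= PiDist a eps delta nd x),
        \sum_(x < nd) PiDist a eps delta nd x = 1 &
        (forall n : nat,
           \sum_(x < nd | (nd - 1 < n + x)%N) PiDist a eps delta nd x
           = pistar a eps delta n)].
Proof.
have mono := @pistar_mono R a eps delta heps hd0 hd1.
have inv := @pistar_inv R a eps delta heps hd0 hd1.
split; first exact: mono.
set z := Num.ceil (delta^-1).
have z0 : 0 <= z.
  rewrite /z ceil_ge0; have : 0 < delta^-1 by rewrite invr_gt0.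
  move=> h; lra.
have [N hN] : exists N : nat, z = N%:Z by exists `|z|%N; rewrite gez0_abs.
have hNd : 1 <= N%:R * delta.
  have h := ceil_ge (delta^-1); rewrite -/z hN in h.
  have := ler_wpM2r (ltW hd0) h; rewrite mulVf ?lt0r_neq0 //.
have PN : pistar a eps delta N = 1.
  have [/andP[h0 h1] [h|h]] := inv N => //; lra.
have exP : exists n, pistar a eps delta n == 1 by exists N; apply/eqP.
case: (ex_minnP exP) => nd /eqP hnd hmin.
have ndN : (nd <= N)%N by apply: hmin; apply/eqP.
have P0 : pistar a eps delta 0 = 0 by [].
exists nd; split.
- by split => // n hn; apply: hmin; apply/eqP.
- by rewrite hN lez_nat.
- move=> x hx; rewrite /PiDist subr_ge0; apply: mono; lia.
- rewrite /PiDist.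
  have -> : \sum_(x < nd) (pistar a eps delta (nd - x) - pistar a eps delta (nd - 1 - x))
     = \sum_(x < nd) (if (nd - 1 < nd + x)%N then pistar a eps delta (nd - x) - pistar a eps delta (nd - 1 - x) else 0).
    apply: eq_bigr => i _; have hi := ltn_ord i.
    by have -> : (nd - 1 < nd + i)%N = true by lia.
  by rewrite tele minnn hnd P0 subr0.
- move=> n; rewrite /PiDist big_mkcond /= tele P0 subr0.
  have [hn|hn] := leqP n nd; first by [].
  rewrite hnd; apply/eqP; rewrite eq_le; apply/andP; split.
    by rewrite -hnd; apply: mono; lia.
  by have [/andP[_ h1] _] := inv n.
Qed.
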